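(* Let $P$ be a countable multiset of primes, $G=\bigoplus_{p\in P}\mathbb{F}_p$, let $X$ be an ergodic $G$-system, let $F:X\to S^1$ be a phase polynomial of degree $<k$, and let $p$ be a prime with $p\geq k$. Suppose $F$ takes values in $C_{p^m}$ for some $m\in\mathbb{N}$. Then there is a constant $c\in S^1$ such that $cF$ takes values in $C_p$.
   Context: $C_r$ is the group of $r$-th roots of unity. A $G$-system is a compact metrizable probability space with measure-preserving $G$-action $(T_g)$; ergodic: only constants invariant. Phase polynomial of degree $<k$: $\Delta_{h_1}\cdots\Delta_{h_k}F=1$ a.e. for all $h_i\in G$, where $\Delta_h\phi=(\phi\circ T_h)/\phi$. *)

(* Defs.v *)
From HB Require Import structures.
From mathcomp Require Import all_boot all_order all_algebra.
From mathcomp Require Import all_classical all_reals all_analysis.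
From mathcomp Require Import complex.
Set Implicit Arguments. Unset Strict Implicit. Unset Printing Implicit Defensive.
Import Order.TTheory GRing.Theory Num.Theory.
Local Open Scope classical_set_scope.
Local Open Scope ring_scope.

(* I is a countable (possibly finite) index type, q : I -> nat the primes,
   so {q i | i in I} is a countable multiset of primes. *)
Definition Gfun (I : Type) (q : I -> nat) := forall i : I, 'F_(q i).

(* elements of the direct sum: finitely supported *)
Definition fin_supp (I : eqType) (q : I -> nat) (g : Gfun q) : Prop :=
  exists s : seq I, forall i, i \notin s -> g i = 0.

Definition G0 (I : Type) (q : I -> nat) : Gfun q := fun i => 0.
Definition Gadd (I : Type) (q : I -> nat) (g h : Gfun q) : Gfun q :=
  fun i => g i + h i.

Definition is_metric (R : realType) (X : Type) (dist : X -> X -> R) : Prop :=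
  [/\ forall x y, 0 <= dist x y,
      forall x y, dist x y = 0 <-> x = y,
      forall x y, dist x y = dist y x &
      forall x y z, dist x z <= dist x y + dist y z].

Definition dopen (R : realType) (X : Type) (dist : X -> X -> R) (A : set X) : Prop :=
  forall x, A x -> exists2 e : R, 0 < e & forall y, dist x y < e -> A y.

Definition dcompact (R : realType) (X : Type) (dist : X -> X -> R) : Prop :=
  forall (J : Type) (U : J -> set X), (forall j, dopen dist (U j)) ->
    \bigcup_j U j = setT ->
    exists s : seq J, forall x, exists2 n, (n < size s)%N & (forall j0 : J, U (nth j0 s n) x).

Definition compact_metrizable_Borel (R : realType) (d : measure_display)
  (X : measurableType d) : Prop :=
  exists dist : X -> X -> R,
    [/\ is_metric dist, dcompact dist &
        forall A : set X, measurable A <-> <<s dopen dist >> A].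

Definition G_system (R : realType) (d : measure_display) (X : measurableType d)
  (mu : probability X R) (I : eqType) (q : I -> nat)
  (T : Gfun q -> X -> X) : Prop :=
  [/\ compact_metrizable_Borel R X,
      forall g, fin_supp g -> measurable_fun setT (T g),
      forall g A, fin_supp g -> measurable A -> mu (T g @^-1` A) = mu A,
      forall x, T (G0 q) x = x &
      forall g h x, fin_supp g -> fin_supp h -> T (Gadd g h) x = T g (T h x)].

Definition ergodic (R : realType) (d : measure_display) (X : measurableType d)
  (mu : probability X R) (I : eqType) (q : I -> nat)
  (T : Gfun q -> X -> X) : Prop :=
  forall f : X -> R, measurable_fun setT f ->
    (forall g, fin_supp g -> {ae mu, forall x, f (T g x) = f x}) ->
    exists c : R, {ae mu, forall x, f x = c}.

Definition circle_mfun (R : realType) (d : measure_display) (X : measurableType d)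
  (F : X -> R[i]) : Prop :=
  [/\ measurable_fun setT (fun x => complex.Re (F x)),
      measurable_fun setT (fun x => complex.Im (F x)) &
      forall x, `|F x| = 1].

Definition Delta (I : Type) (q : I -> nat) (X : Type) (R : realType)
  (T : Gfun q -> X -> X) (h : Gfun q) (F : X -> R[i]) : X -> R[i] :=
  fun x => F (T h x) / F x.

Definition Delta_iter (I : Type) (q : I -> nat) (X : Type) (R : realType)
  (T : Gfun q -> X -> X) (hs : seq (Gfun q)) (F : X -> R[i]) : X -> R[i] :=
  foldr (Delta T) F hs.

Definition phase_poly_lt (R : realType) (d : measure_display) (X : measurableType d)
  (mu : probability X R) (I : eqType) (q : I -> nat)
  (T : Gfun q -> X -> X) (k : nat) (F : X -> R[i]) : Prop :=
  circle_mfun F /\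
  forall hs : seq (Gfun q), size hs = k -> (forall h, h \in hs -> fin_supp h) ->
    {ae mu, forall x, Delta_iter T hs F x = 1}.

(* Main.v *)
Require Import Defs.
From HB Require Import structures.
From mathcomp Require Import all_boot all_order all_algebra.
From mathcomp Require Import all_classical all_reals all_analysis.
From mathcomp Require Import complex.
From mathcomp Require Import zify ring.
Import Order.TTheory GRing.Theory Num.Theory.
Local Open Scope classical_set_scope.
Local Open Scope ring_scope.

Module AlgSeq.
Set Implicit Arguments.
Unset Strict Implicit.

Section Seq.
Local Open Scope ring_scope.
Variable K : fieldType.
Definition dd (u : nat -> K) : nat -> K := fun j => u j.+1 / u j.

Lemma dd_nz u : (forall j, u j != 0) -> forall j, dd u j != 0.
Proof. by move=> h j; rewrite /dd mulf_neq0 ?invr_eq0. Qed.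

Lemma iter_dd_nz n u : (forall j, u j != 0) -> forall j, iter n dd u j != 0.
Proof. elim: n => [|n IH] //= h j; exact: dd_nz (IH h) j. Qed.

Lemma iter_dd_shift n u j i : iter n dd (fun i => u (i + j)%N) i = iter n dd u (i + j)%N.
Proof. elim: n i => [|n IH] i //=; rewrite /dd !IH addSn. by []. Qed.

Lemma iter_ddS n u j : iter n dd (dd u) j = iter n.+1 dd u j.
Proof. by rewrite iterSr. Qed.

Lemma dd_torsion (p : nat) u : (forall j, u j != 0) -> (forall j, u j ^+ p = 1) ->
  forall j, dd u j ^+ p = 1.
Proof. by move=> nz h j; rewrite /dd exprMn exprVn !h invr1 mulr1. Qed.

Lemma tele u j L : (forall j, u j != 0) ->
  \prod_(i < L) dd u (i + j)%N = u (L + j)%N / u j.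
Proof.
move=> nz; elim: L => [|L IH]; first by rewrite big_ord0 add0n divff.
rewrite big_ord_recr /= IH /dd addSn.
have h1 := nz (L + j)%N; have h2 := nz j. field. by rewrite h1 h2.
Qed.

Definition Q L s (w : nat -> K) := \prod_(i < L) w i ^+ 'C(L - i.+1, s).

Lemma Q_step L s w : (forall j, w j != 0) ->
  Q L s w = w 0%N ^+ 'C(L, s.+1) * Q L s.+1 (dd w).
Proof.
elim: L s w => [|L IH] s w nz; first by rewrite /Q !big_ord0 bin0n expr0 mulr1.
rewrite /Q big_ord_recl subSS subn0.
under eq_bigr do rewrite subSS.
rewrite -/(Q L s (fun i => w i.+1)) IH; last by move=> j; apply: nz.
rewrite big_ord_recl subSS subn0.
under [X in _ = _ * (_ * X)]eq_bigr do rewrite subSS.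
rewrite -/(Q L s.+1 (fun i => dd w i.+1)).
have -> : dd (fun i => w i.+1) = (fun i => dd w i.+1) by [].
rewrite binS exprD /dd exprMn exprVn.
have h0 := expf_neq0 'C(L, s.+1) (nz 0%N).
set a := w 0%N ^+ _; set b := w 0%N ^+ _; set c := w 1%N ^+ _.
field. by [].
Qed.

Lemma Q_vanish (p : nat) (pp : prime p) n : forall s w, (forall j, w j != 0) ->
  (forall j, w j ^+ p = 1) -> (forall j, iter n dd w j = 1) -> (s + n < p)%N ->
  Q p s w = 1.
Proof.
elim: n => [|n IH] s w nz tor hd hlt.
  by rewrite /Q big1 // => i _; have := hd i; rewrite /= => ->; rewrite expr1n.
rewrite Q_step // IH //; first last.
- by rewrite addSnnS.
- by move=> j; rewrite iter_ddS hd.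
- exact: dd_torsion.
- exact: dd_nz.
have : (p %| 'C(p, s.+1))%N by apply: prime_dvd_bin => //; apply/andP; split => //; lia.
case/dvdnP => t ->; by rewrite mulnC exprM tor expr1n mulr1.
Qed.

Lemma SLp (p : nat) (pp : prime p) k : forall u, (forall j, u j != 0) ->
  (forall j, u (j + p)%N = u j) -> (forall j, iter k dd u j = 1) -> (k <= p)%N ->
  forall j, dd u j ^+ p = 1.
Proof.
elim: k => [|n IH] u nz per hd hk j.
  by rewrite /dd; have := hd j.+1; have := hd j; rewrite /= => -> ->; rewrite divr1 expr1n.
have nzG := dd_nz nz.
have perG : forall j, dd u (j + p)%N = dd u j by move=> i; rewrite /dd -addSn !per.
have IH' := IH (dd u) nzG perG (fun j => etrans (iter_ddS _ _ _) (hd j)) (ltnW hk).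
set w := fun i => dd u (i + j)%N.
have nzw : forall i, w i != 0 by move=> i; exact: nzG.
have H0 : Q p 0 w = 1.
  rewrite /Q; under eq_bigr do rewrite bin0 expr1.
  rewrite tele // addnC per divff //.
have H1 : Q p 1 (dd w) = 1.
  apply: (@Q_vanish p pp n.-1) => //.
  - exact: dd_nz.
  - move=> i; rewrite /w /dd /=. have := IH' (i + j)%N. by rewrite /dd addSn.
  - case: n {IH IH' hk} hd => [|n] hd i /=.
      have e := hd (i.+1 + j)%N; have e2 := hd (i + j)%N.
      rewrite /= in e e2. rewrite /= {1}/dd /w e e2 divr1 //.
    rewrite -iterSr -iterSr /w.
    have := iter_dd_shift n.+2 u j i. rewrite /= => ->. exact: hd.
  - have := prime_gt1 pp; lia.
have := @Q_step p 0 w nzw. rewrite H0 H1 mulr1 bin1 => <-. by [].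
Qed.

Lemma coprime_root (c : K) a b : (0 < a)%N -> coprime a b -> c ^+ a = 1 -> c ^+ b = 1 -> c = 1.
Proof.
move=> a0 cab ha hb; have [x _] := Bezoutl b a0.
rewrite (eqP cab) => /dvdnP [y e].
have : c ^+ (1 + x * b) = c ^+ (y * a) by rewrite e.
by rewrite exprD expr1 [(x * b)%N]mulnC [(y * a)%N]mulnC !exprM hb ha !expr1n mulr1.
Qed.

Lemma SLq (p N m : nat) k : forall u, (0 < N)%N -> coprime N p -> (forall j, u j != 0) ->
  (forall j, u (j + N)%N = u j) -> (forall j, iter k dd u j = 1) ->
  (forall j, u j ^+ (p ^ m) = 1) -> forall j, dd u j ^+ p = 1.
Proof.
elim: k => [|n IH] u N0 cop nz per hd tor j.
  by rewrite /dd; have := hd j.+1; have := hd j; rewrite /= => -> ->; rewrite divr1 expr1n.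
have nzG := dd_nz nz.
have perG : forall j, dd u (j + N)%N = dd u j by move=> i; rewrite /dd -addSn !per.
have IH' := IH (dd u) N0 cop nzG perG (fun j => etrans (iter_ddS _ _ _) (hd j)) (dd_torsion nz tor).
have cst : forall j, dd u j ^+ p = dd u 0%N ^+ p.
  elim=> [|i ei] //; rewrite -ei.
  have := IH' i; rewrite {1}/dd exprMn exprVn.
  move/(congr1 (fun z => z * dd u i ^+ p)); rewrite divfK ?expf_neq0 // mul1r //.
apply: (@coprime_root _ N (p ^ m)) => //.
- by rewrite coprimeXr.
- rewrite cst -[N in _ ^+ N]subn0 -(prodr_const_nat 0 N).
  under eq_bigr => i _ do rewrite -(cst i).
  rewrite prodrXl.
  have := tele 0 N nz. rewrite big_mkord.
  under eq_bigr do rewrite addn0.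
  by move=> ->; rewrite addn0 -{1}[N]add0n per divff // expr1n.
- by rewrite -exprM mulnC exprM (dd_torsion nz tor) expr1n.
Qed.
End Seq.
End AlgSeq.
Import AlgSeq.

Section M.
Context (R : realType) (I : countType) (q : I -> nat) (d : measure_display)
  (X : measurableType d) (mu : probability X R) (T : Gfun q -> X -> X)
  (HG : G_system mu T).

Lemma ae_T (g : Gfun q) (P : X -> Prop) : fin_supp g ->
  {ae mu, forall x, P x} -> {ae mu, forall x, P (T g x)}.
Proof.
move=> fg [A [mA A0 sub]].
case: HG => _ Hm Hp _ _.
exists (T g @^-1` A); split.
- by have := Hm g fg measurableT A mA; rewrite setTI.
- by rewrite Hp.
- by move=> x /= nP; apply: sub.
Qed.

Definition Gscale (g : Gfun q) (n : nat) : Gfun q := fun i => g i *+ n.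

Lemma fin_supp_scale g n : fin_supp g -> fin_supp (Gscale g n).
Proof. by move=> [s hs]; exists s => i /hs; rewrite /Gscale => ->; rewrite mul0rn. Qed.

Lemma T_scale g n x : fin_supp g -> T (Gscale g n) x = iter n (T g) x.
Proof.
move=> fg; case: HG => _ _ _ H0 Hadd.
elim: n => [|n IH].
  have -> : Gscale g 0 = G0 q by apply: functional_extensionality_dep => i; rewrite /Gscale mulr0n.
  by rewrite H0.
have -> : Gscale g n.+1 = Gadd g (Gscale g n).
  by apply: functional_extensionality_dep => i; rewrite /Gscale /Gadd mulrS.
by rewrite Hadd ?IH //; exact: fin_supp_scale.
Qed.

Lemma ae_T_iter g (P : X -> Prop) n : fin_supp g ->
  {ae mu, forall x, P x} -> {ae mu, forall x, P (iter n (T g) x)}.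
Proof.
move=> fg hP; have := ae_T _ _ (fin_supp_scale _ n fg) hP.
by apply: filterS => x; rewrite T_scale.
Qed.

Definition useq (F : X -> R[i]) g x : nat -> R[i] := fun j => F (iter j (T g) x).

Lemma Delta_iter_seq (F : X -> R[i]) g n y :
  Delta_iter T (nseq n g) F y = iter n (@dd _) (useq F g y) 0%N.
Proof.
elim: n y => [|n IH] y //=.
rewrite /Delta IH IH.
have -> : useq F g (T g y) = (fun j => useq F g y (j + 1)%N).
  by apply: funext => j; rewrite /useq addn1 iterSr.
by rewrite iter_dd_shift.
Qed.

Lemma useq_shift (F : X -> R[i]) g x j :
  useq F g (iter j (T g) x) = (fun i => useq F g x (i + j)%N).
Proof. by apply: funext => i; rewrite /useq iterD. Qed.

Lemma seq_ae (F : X -> R[i]) k g (p m : nat) : fin_supp g -> phase_poly_lt mu T k F ->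
  {ae mu, forall x, F x ^+ (p ^ m) = 1} ->
  {ae mu, forall x, (forall j, iter k (@dd _) (useq F g x) j = 1) /\ (forall j, useq F g x j ^+ (p ^ m) = 1)}.
Proof.
move=> fg [_ HF] Hm.
have h1 : {ae mu, forall x, Delta_iter T (nseq k g) F x = 1}.
  apply: HF; first by rewrite size_nseq.
  by move=> h; rewrite mem_nseq => /andP[_ /eqP->].
have A1 : {ae mu, forall x, forall j, Delta_iter T (nseq k g) F (iter j (T g) x) = 1}.
  by apply: (ae_foralln (P := fun j x => Delta_iter T (nseq k g) F (iter j (T g) x) = 1)) => j; exact: (ae_T_iter g (fun x => Delta_iter T (nseq k g) F x = 1) j fg h1).
have A2 : {ae mu, forall x, forall j, F (iter j (T g) x) ^+ (p ^ m) = 1}.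
  by apply: (ae_foralln (P := fun j x => F (iter j (T g) x) ^+ (p ^ m) = 1)) => j; exact: (ae_T_iter g (fun x => F x ^+ (p ^ m) = 1) j fg Hm).
apply: filterS2 A1 A2 => x a1 a2; split => j; last exact: a2.
by rewrite -(add0n j) -iter_dd_shift -useq_shift -Delta_iter_seq.
Qed.

Lemma circle_nz (F : X -> R[i]) : (forall x, `|F x| = 1) -> forall y, F y != 0.
Proof.
move=> n1 y; apply/eqP => e; have := n1 y; rewrite e normr0 => /eqP.
by rewrite eq_sym oner_eq0.
Qed.

Lemma useq_per (F : X -> R[i]) g N x : fin_supp g -> Gscale g N = G0 q ->
  forall j, useq F g x (j + N)%N = useq F g x j.
Proof.
move=> fg eN j; rewrite /useq iterD -(T_scale g N) // eN.
by case: HG => _ _ _ -> _.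
Qed.

Lemma Delta_p (F : X -> R[i]) k g (p m : nat) : prime p -> (k <= p)%N ->
  fin_supp g -> Gscale g p = G0 q -> phase_poly_lt mu T k F ->
  {ae mu, forall x, F x ^+ (p ^ m) = 1} ->
  {ae mu, forall x, Delta T g F x ^+ p = 1}.
Proof.
move=> pp kp fg eN HF Hm.
have nz := circle_nz F (let: And3 _ _ h := HF.1 in h).
apply: filterS (seq_ae F k g p m fg HF Hm) => x [a1 a2].
have := SLp pp (u := useq F g x) (fun j => nz _) (useq_per F g p x fg eN) a1 kp 0.
by [].
Qed.

Lemma Delta_q (F : X -> R[i]) k g (p m N : nat) : (0 < N)%N -> coprime N p ->
  fin_supp g -> Gscale g N = G0 q -> phase_poly_lt mu T k F ->
  {ae mu, forall x, F x ^+ (p ^ m) = 1} ->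
  {ae mu, forall x, Delta T g F x ^+ p = 1}.
Proof.
move=> N0 cop fg eN HF Hm.
have nz := circle_nz F (let: And3 _ _ h := HF.1 in h).
apply: filterS (seq_ae F k g p m fg HF Hm) => x [a1 a2].
have := SLq (u := useq F g x) N0 cop (fun j => nz _) (useq_per F g N x fg eN) a1 a2 0.
by [].
Qed.

Lemma Fp_mulrn (r : nat) (x : 'F_r) : prime r -> x *+ r = 0.
Proof. by move=> pr; apply: mulrn_pchar; apply: pchar_Fp. Qed.

Lemma Key (q_prime : forall i, prime (q i)) (F : X -> R[i]) k h (p m : nat) :
  prime p -> (k <= p)%N -> fin_supp h -> phase_poly_lt mu T k F ->
  {ae mu, forall x, F x ^+ (p ^ m) = 1} ->
  {ae mu, forall x, Delta T h F x ^+ p = 1}.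
Proof.
move=> pp kp fh HF Hm.
have nz := circle_nz F (let: And3 _ _ h := HF.1 in h).
case: (fh) => s hs.
pose a : Gfun q := fun i => if q i == p then h i else 0.
pose b : Gfun q := fun i => if q i == p then 0 else h i.
have fa : fin_supp a by exists s => i /hs; rewrite /a => ->; case: ifP.
have fb : fin_supp b by exists s => i /hs; rewrite /b => ->; case: ifP.
have eh : h = Gadd a b.
  by apply: functional_extensionality_dep => i; rewrite /Gadd /a /b; case: ifP; rewrite ?addr0 ?add0r.
have ea : Gscale a p = G0 q.
  apply: functional_extensionality_dep => i; rewrite /Gscale /a /G0.
  case: eqP => [e|_]; last by rewrite mul0rn.
  by rewrite -e Fp_mulrn.
pose N := (\prod_(j <- s | q j != p) q j)%N.
have N0 : (0 < N)%N by apply: (big_ind (fun n => 0 < n)%N) => //= [x y|j _]; [rewrite muln_gt0 => -> | exact: prime_gt0].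
have cop : coprime N p.
  apply: (big_ind (fun n => coprime n p)) => //= [|x y|j hj]; first exact: coprime1n; first by rewrite coprimeMl => ->.
  by rewrite prime_coprime // dvdn_prime2.
have eb : Gscale b N = G0 q.
  apply: functional_extensionality_dep => i; rewrite /Gscale /b /G0.
  case: eqP => [_|ne]; first by rewrite mul0rn.
  case: (boolP (i \in s)) => [ins|nins]; last by rewrite hs // mul0rn.
  rewrite /N (big_rem _ ins) /=; case: eqP => // _.
  by rewrite mulrnA Fp_mulrn // mul0rn.
have Da := Delta_p F k a p m pp kp fa ea HF Hm.
have Db := Delta_q F k b p m N N0 cop fb eb HF Hm.
have Da' := ae_T b _ fb Da.
apply: filterS2 Da' Db => x e1 e2.
have -> : Delta T h F x = Delta T a F (T b x) * Delta T b F x.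
  rewrite /Delta eh; case: HG => _ _ _ _ ->; [|done|done].
  have := nz (T b x); have := nz x. move=> n1 n2. field. by rewrite n1 n2.
by rewrite exprMn e1 e2 mulr1.
Qed.
End M.

Lemma ReM' (R : realType) (z w : R[i]) : complex.Re (z * w) = complex.Re z * complex.Re w - complex.Im z * complex.Im w.
Proof. by case: z => a b; case: w => c e. Qed.
Lemma ImM' (R : realType) (z w : R[i]) : complex.Im (z * w) = complex.Re z * complex.Im w + complex.Im z * complex.Re w.
Proof. by case: z => a b; case: w => c e. Qed.

Lemma meas_pow (R : realType) (d : measure_display) (X : measurableType d) (F : X -> R[i]) n :
  measurable_fun setT (fun x => complex.Re (F x)) ->
  measurable_fun setT (fun x => complex.Im (F x)) ->
  measurable_fun setT (fun x => complex.Re (F x ^+ n)) /\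
  measurable_fun setT (fun x => complex.Im (F x ^+ n)).
Proof.
move=> mRe mIm; elim: n => [|n [IH1 IH2]].
  by split; apply: measurable_cst.
have -> : (fun x => complex.Re (F x ^+ n.+1)) = (fun x => complex.Re (F x) * complex.Re (F x ^+ n) - complex.Im (F x) * complex.Im (F x ^+ n)).
  by apply: funext => x; rewrite exprS ReM'.
have -> : (fun x => complex.Im (F x ^+ n.+1)) = (fun x => complex.Re (F x) * complex.Im (F x ^+ n) + complex.Im (F x) * complex.Re (F x ^+ n)).
  by apply: funext => x; rewrite exprS ImM'.
split.
  by apply: measurable_realfun.measurable_funB; apply: measurable_realfun.measurable_funM.
by apply: measurable_realfun.measurable_funD; apply: measurable_realfun.measurable_funM.
Qed.

Theorem theoremB9 (R : realType) (I : countType) (q : I -> nat)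
  (q_prime : forall i, prime (q i))
  (d : measure_display) (X : measurableType d) (mu : probability X R)
  (T : Gfun q -> X -> X)
  (HG : G_system mu T) (Herg : ergodic mu T)
  (k : nat) (F : X -> R[i]) (HF : phase_poly_lt mu T k F)
  (p : nat) (p_prime : prime p) (hpk : (k <= p)%N)
  (m : nat) (Hm : {ae mu, forall x, F x ^+ (p ^ m) = 1}) :
  exists c : R[i], `|c| = 1 /\ {ae mu, forall x, (c * F x) ^+ p = 1}.
Proof.
have HK := fun h fh => Key _ _ _ _ _ _ _ HG q_prime F k h p m p_prime hpk fh HF Hm.
case: (HF) => [[mRe mIm n1] _].
have nz : forall y, F y != 0.
  move=> y; apply/eqP => e; have := n1 y; rewrite e normr0 => /eqP.
  by rewrite eq_sym oner_eq0.
have inv : forall g, fin_supp g -> {ae mu, forall x, F (T g x) ^+ p = F x ^+ p}.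
  move=> g fg; apply: filterS (HK g fg) => x; rewrite /Delta exprMn exprVn => e.
  by have := congr1 (fun z => z * F x ^+ p) e; rewrite divfK ?expf_neq0 // mul1r.
have [mP1 mP2] := meas_pow _ _ _ F p mRe mIm.
have [c1 h1] := Herg _ mP1 (fun g fg => filterS (fun x (e : F (T g x) ^+ p = F x ^+ p) => congr1 (@complex.Re R) e) (inv g fg)).
have [c2 h2] := Herg _ mP2 (fun g fg => filterS (fun x (e : F (T g x) ^+ p = F x ^+ p) => congr1 (@complex.Im R) e) (inv g fg)).
set w : R[i] := (c1 +i* c2)%C.
have hw : {ae mu, forall x, F x ^+ p = w}.
  apply: filterS2 h1 h2 => x e1 e2; rewrite /w -e1 -e2.
  by case: (F x ^+ p).
have [x0 hx0] : exists x, F x ^+ p = w.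
  case: (hw) => A [mA A0 sub].
  have [//|nE] := pselect (exists x, F x ^+ p = w); exfalso.
  have H0 : mu setT = 0%E.
    apply: (subset_measure0 (A := setT) (B := A)) => //.
    by move=> y _; apply: sub => /= e; apply: nE; exists y.
  by move: (probability_setT mu); rewrite H0 => /eqP; rewrite eqe eq_sym oner_eq0.
have wn : `|w| = 1 by rewrite -hx0 normrX n1 expr1n.
have w0 : w != 0.
  by apply/eqP => e; move: wn; rewrite e normr0 => /eqP; rewrite eq_sym oner_eq0.
have p0 : (0 < p)%N by apply: prime_gt0.
exists (p.-root (w^-1)); split.
  by rewrite norm_rootC normfV wn invr1 rootC1.
apply: filterS hw => x e.
by rewrite exprMn rootCK // e mulVf.
Qed.
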